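(* Let $k\ge 3$ and let $\sigma$ be a (possibly vincular) pattern of length $k$ whose underlying permutation is $k(k-1)\cdots 1$ (with any choice of underlined entries). Then for every positive integer $n$, \[\mathrm{Sort}_n(\mathrm{SC}_\sigma)=\mathrm{Av}_n(\mathrm{rev}(\sigma),132).\]
   Context: $\mathfrak S_n$ is the set of permutations of $\{1,\dots,n\}$. A vincular pattern is a permutation some of whose entries are underlined; a sequence contains it if it has a subsequence with the same relative order in which entries corresponding to adjacent underlined entries of the pattern occupy consecutive positions of the sequence; otherwise it avoids it. $\mathrm{Av}_n(\dots)$ is the set of permutations in $\mathfrak S_n$ avoiding all listed patterns. $\mathrm{rev}(\sigma)$ is the reverse of $\sigma$, with the underlining reversed accordingly. For a pattern $\sigma$, the $\sigma$-avoiding stack-sorting map $\mathrm{SC}_\sigma$ acts on $\tau$: read entries left to right; when the next entry $x$ is read, if pushing $x$ yields a stack whose entries read top to bottom (adjacency in the stack counting as consecutive positions) avoid $\sigma$, push $x$; otherwise pop the top stack entry to the output and repeat. At the end pop all remaining entries to the output; the output is $\mathrm{SC}_\sigma(\tau)$. West's stack-sorting map is $s=\mathrm{SC}_{21}$. $\mathrm{Sort}_n(\mathrm{SC}_\sigma)=\{\tau\in\mathfrak S_n : s(\mathrm{SC}_\sigma(\tau))=12\cdots n\}$. *)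

(* Defs.v *)
From mathcomp Require Import all_boot.
Set Implicit Arguments. Unset Strict Implicit. Unset Printing Implicit Defensive.

(* A (possibly vincular) pattern: its underlying sequence [pperm] (a
   permutation of 1..k) and a bit sequence [pund] of the same length marking
   which entries are underlined. *)
Record pattern := Pattern { pperm : seq nat; pund : seq bool }.

Fixpoint subseqs (s : seq nat) : seq (seq nat) :=
  if s is x :: xs then let r := subseqs xs in map (cons x) r ++ r else [:: [::]].

(* [idx] (strictly increasing positions of [s]) is an occurrence of [p] in [s]:
   same relative order, and entries matching adjacent underlined entries of the
   pattern occupy consecutive positions. *)
Definition occurrence (p : pattern) (s : seq nat) (idx : seq nat) : bool :=
  let k := size (pperm p) in
  [&& size idx == k,
      all (fun a => all (fun b =>
             (nth 0 s (nth 0 idx a) < nth 0 s (nth 0 idx b)) ==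
             (nth 0 (pperm p) a < nth 0 (pperm p) b)) (iota 0 k)) (iota 0 k)
    & all (fun j => (nth false (pund p) j && nth false (pund p) j.+1) ==>
                    (nth 0 idx j.+1 == (nth 0 idx j).+1)) (iota 0 k.-1)].

Definition contains (s : seq nat) (p : pattern) : bool :=
  has (occurrence p s) (subseqs (iota 0 (size s))).

Definition avoids (s : seq nat) (p : pattern) : bool := ~~ contains s p.

Definition avoids_all (s : seq nat) (ps : seq pattern) : bool :=
  all (avoids s) ps.

Definition pat_rev (p : pattern) : pattern := Pattern (rev (pperm p)) (rev (pund p)).

Definition pat21 : pattern := Pattern [:: 2; 1] [:: false; false].
Definition pat132 : pattern := Pattern [:: 1; 3; 2] [:: false; false; false].

(* The stack is a seq whose head is the top of the stack; read top to bottom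
   it is the sequence itself. *)
Fixpoint push_step (sigma : pattern) (x : nat) (st out : seq nat)
  : seq nat * seq nat :=
  if avoids (x :: st) sigma then (x :: st, out) else
  match st with
  | [::] => ([:: x], out)
  | y :: st' => push_step sigma x st' (rcons out y)
  end.

Fixpoint sc_loop (sigma : pattern) (tau st out : seq nat) : seq nat :=
  match tau with
  | [::] => out ++ st
  | x :: tau' => let: (st', out') := push_step sigma x st out in
                 sc_loop sigma tau' st' out'
  end.

Definition SC (sigma : pattern) (tau : seq nat) : seq nat := sc_loop sigma tau [::] [::].

Definition west_s (tau : seq nat) : seq nat := SC pat21 tau.

Definition is_perm (n : nat) (tau : seq nat) : bool := perm_eq tau (iota 1 n).

Definition in_Sort (n : nat) (sigma : pattern) (tau : seq nat) : bool :=
  is_perm n tau && (west_s (SC sigma tau) == iota 1 n).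

Definition in_Av (n : nat) (ps : seq pattern) (tau : seq nat) : bool :=
  is_perm n tau && avoids_all tau ps.

(* Main.v *)
Require Import Defs.
From mathcomp Require Import all_boot zify.
Set Implicit Arguments. Unset Strict Implicit. Unset Printing Implicit Defensive.

Lemma mem_subseqs_iota n m idx :
  (idx \in subseqs (iota m n)) = sorted ltn idx && all (fun i => m <= i < m + n) idx.
Proof.
elim: n m idx => [|n IH] m idx.
  case: idx => [|i t] //=.
  have -> : (m <= i < m + 0) = false by lia.
  by rewrite andbF.
rewrite /= mem_cat IH; case: idx => [|i t] /=.
  by apply/orP; right.
rewrite path_sortedE; last exact: ltn_trans.
have -> : (i :: t \in [seq m :: x | x <- subseqs (iota m.+1 n)]) =
          (i == m) && (t \in subseqs (iota m.+1 n)).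
  case: eqP => [->|ne] /=; first by rewrite mem_map // => ? ? [].
  by apply/mapP => -[t' _ [E _]].
rewrite IH.
case: eqP => [->|ne] /=.
  rewrite leqnn /= addnS ltnS leq_addr /=.
  apply/idP/idP.
    case/orP => [/andP[-> /allP H]|/andP[_ /andP[]]]; last by rewrite ltnn.
    rewrite andbT; apply/andP; split; apply/allP => x /H /andP[]; rewrite ?/ltn /=; lia.
  case/andP => /andP[/allP H1 ->] /allP H2 /=; apply/orP; left.
  apply/allP => x xt; have := H1 x xt; have := H2 x xt; rewrite /ltn /=; lia.
have -> : (m <= i < m + n.+1) = (m.+1 <= i < m.+1 + n) by lia.
apply/idP/idP; case/andP => /andP[A B] /andP[C D]; rewrite A B C /=.
  apply/allP => x xt; have := allP A x xt; have := allP D x xt; rewrite /ltn /=; lia.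
apply/allP => x xt; have := allP A x xt; have := allP D x xt; rewrite /ltn /=; lia.
Qed.

Lemma containsP s p :
  reflect (exists idx, [/\ sorted ltn idx, all (fun i => i < size s) idx & occurrence p s idx])
          (contains s p).
Proof.
apply: (iffP hasP) => [[idx]|[idx [A B C]]].
  rewrite mem_subseqs_iota => /andP[A B] C; exists idx; split => //.
exists idx => //; rewrite mem_subseqs_iota A /=.
by apply/allP => i /(allP B); rewrite add0n.
Qed.

Lemma occ_map p s s' idx (f : nat -> nat) :
  sorted ltn idx -> all (fun i => i < size s) idx -> occurrence p s idx ->
  {in idx &, forall i j, i < j -> f i < f j} ->
  (forall i, i \in idx -> f i < size s' /\ nth 0 s' (f i) = nth 0 s i) ->
  (forall i, i \in idx -> i.+1 \in idx -> f i.+1 = (f i).+1) ->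
  contains s' p.
Proof.
move=> So Bd /and3P[/eqP Sz Ord Adj] Mono Val Cons.
apply/containsP; exists (map f idx); split.
- exact: (homo_sorted_in Mono (introT allP (fun x h => h))).
- by apply/allP => _ /mapP[i iin ->]; case: (Val i iin).
apply/and3P; split; first by rewrite size_map Sz.
- apply/allP => a; rewrite mem_iota add0n => ak.
  have := allP Ord a; rewrite mem_iota add0n => /(_ ak) /allP Ha.
  apply/allP => b; rewrite mem_iota add0n => bk.
  have := Ha b; rewrite mem_iota add0n => /(_ bk).
  rewrite -Sz in ak bk.
  rewrite !(nth_map 0) // (Val _ (mem_nth 0 ak)).2 (Val _ (mem_nth 0 bk)).2 //.
- apply/allP => j; rewrite mem_iota add0n => jk.
  have := allP Adj j; rewrite mem_iota add0n => /(_ jk) /implyP Hj.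
  apply/implyP => /Hj /eqP E.
  have j1 : j.+1 < size idx by rewrite Sz; lia.
  have j0 : j < size idx by lia.
  rewrite !(nth_map 0) // E Cons //; last by rewrite -E mem_nth.
  exact: mem_nth.
Qed.

Lemma mem_subseqs (s t : seq nat) : (t \in subseqs s) = subseq t s.
Proof.
elim: s t => [|x s IH] t /=; first by case: t.
rewrite mem_cat IH; case: t => [|y t] /=.
  by rewrite sub0seq orbT.
case: eqP => [->|ne].
  rewrite mem_map; last by move=> ? ? [].
  rewrite IH; apply/orP/idP => [[//|]|->]; last by left.
  by apply: subseq_trans; apply: subseq_cons.
have -> : (y :: t \in [seq x :: i | i <- subseqs s]) = false.
  by apply/mapP => -[t' _ [E _]].
by [].
Qed.

Lemma occ_of_containsP s p :
  reflect (exists idx, subseq idx (iota 0 (size s)) /\ occurrence p s idx) (contains s p).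
Proof.
apply: (iffP hasP) => [[idx]|[idx [A B]]].
  by rewrite mem_subseqs => A B; exists idx.
by exists idx => //; rewrite mem_subseqs.
Qed.

Lemma contains_classic s p : (forall j, nth false (pund p) j = false) ->
  contains s p <-> exists t, subseq t s /\ occurrence p t (iota 0 (size t)).
Proof.
move=> Hu; split.
  case/occ_of_containsP => idx [Sub /and3P[/eqP Sz Ord Adj]].
  have Bd : forall i, i \in idx -> i < size s.
    by move=> i /(mem_subseq Sub); rewrite mem_iota.
  exists (map (nth 0 s) idx); split.
    by rewrite -{2}(mkseq_nth 0 s); apply: map_subseq.
  apply/and3P; split; first by rewrite !size_map size_iota Sz.
  - apply/allP => a; rewrite mem_iota add0n => ak.
    have := allP Ord a; rewrite mem_iota add0n => /(_ ak) /allP Ha.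
    apply/allP => b; rewrite mem_iota add0n => bk.
    have := Ha b; rewrite mem_iota add0n => /(_ bk).
    rewrite -Sz in ak bk.
    by rewrite size_map !nth_iota ?add0n ?(nth_map 0) //; lia.
  - apply/allP => j; rewrite mem_iota add0n => /andP[_ jk].
    rewrite size_map !nth_iota ?add0n ?eqxx ?implybT //; lia.
case=> t [/subseqP[m Sm ->] Occ].
apply/occ_of_containsP; exists (mask m (iota 0 (size s))); split.
  exact: mask_subseq.
have Et : map (nth 0 s) (mask m (iota 0 (size s))) = mask m s.
  by rewrite map_mask; have := mkseq_nth 0 s; rewrite /mkseq => ->.
case/and3P: Occ => /eqP Sz Ord _.
have Sz' : size (mask m (iota 0 (size s))) = size (mask m s).
  by rewrite -Et size_map.
apply/and3P; split; first by rewrite Sz' -Sz size_iota.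
- apply/allP => a; rewrite mem_iota add0n => ak.
  have := allP Ord a; rewrite mem_iota add0n => /(_ ak) /allP Ha.
  apply/allP => b; rewrite mem_iota add0n => bk.
  have := Ha b; rewrite mem_iota add0n => /(_ bk).
  rewrite -Sz size_iota in ak bk.
  rewrite !nth_iota // !add0n -Et !(nth_map 0) //; by rewrite Sz'.
- by apply/allP => j _; rewrite Hu.
Qed.

Lemma contains21 s : contains s pat21 <-> exists a b, b < a /\ subseq [:: a; b] s.
Proof.
have Hu : forall j, nth false (pund pat21) j = false.
  by move=> [|[|j]] //=; rewrite nth_nil.
rewrite (contains_classic s Hu); split.
  case=> t [Sub]; case: t Sub => [|a [|b [|c t]]] Sub //; rewrite /occurrence /=.
  move=> /andP[/and3P[_ /and3P[/eqP ba _ _] _] _].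
  by exists a, b; rewrite ba.
case=> a [b [ba Sub]]; exists [:: a; b]; split => //.
have ab : (a < b) = false by rewrite ltnNge (ltnW ba).
by rewrite /occurrence /= !ltnn ab ba.
Qed.

Lemma contains132 s : contains s pat132 <-> exists a b c, a < b < c /\ subseq [:: a; c; b] s.
Proof.
have Hu : forall j, nth false (pund pat132) j = false.
  by move=> [|[|[|j]]] //=; rewrite nth_nil.
rewrite (contains_classic s Hu); split.
  case=> t [Sub]; case: t Sub => [|a [|c [|b [|d t]]]] Sub //; rewrite /occurrence /=.
  move=> /andP[/and4P[/and4P[_ _ /eqP ab _] _ /and4P[_ /eqP bc _ _] _] _].
  by exists a, b, c; rewrite ab bc.
case=> a [b [c [/andP[ab bc] Sub]]]; exists [:: a; c; b]; split => //.
have ac : a < c by apply: ltn_trans bc.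
have F : forall x y, x < y -> (y < x) = false by move=> x y h; rewrite ltnNge (ltnW h).
by rewrite /occurrence /= !ltnn ab bc ac (F _ _ ab) (F _ _ bc) (F _ _ ac).
Qed.


Lemma contains_catr s t p : contains s p -> contains (s ++ t) p.
Proof.
case/containsP => idx [So Bd Oc]; apply: (occ_map (f := id) So Bd Oc) => //.
move=> i iin; have := allP Bd i iin => lt.
by rewrite size_cat nth_cat lt; split => //; lia.
Qed.

Lemma contains_catl s t p : contains s p -> contains (t ++ s) p.
Proof.
case/containsP => idx [So Bd Oc]; apply: (occ_map (f := addn (size t)) So Bd Oc).
- by move=> i j _ _; rewrite ltn_add2l.
- move=> i iin; have := allP Bd i iin => lt.
  rewrite size_cat nth_cat; case: (ltnP (size t + i) (size t)) => h; first lia.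
  rewrite addKn; split => //; lia.
- by move=> i _ _; rewrite addnS.
Qed.

Lemma contains_size s p : contains s p -> size (pperm p) <= size s.
Proof.
case/containsP => idx [So Bd /and3P[/eqP Sz _ _]].
rewrite -Sz -(size_iota 0 (size s)); apply: uniq_leq_size.
  exact: (sorted_uniq ltn_trans ltnn So).
by move=> i /(allP Bd) lt; rewrite mem_iota.
Qed.

Lemma contains_del p s j idx :
  sorted ltn idx -> all (fun i => i < size s) idx -> occurrence p s idx ->
  j \notin idx -> j < size s -> contains (take j s ++ drop j.+1 s) p.
Proof.
move=> So Bd Oc jn js.
have ne : forall i, i \in idx -> i != j by move=> i iin; apply/eqP => E; move: jn; rewrite -E iin.
apply: (occ_map (f := fun i => if i < j then i else i.-1) So Bd Oc).
- move=> i i' iin i'in lt; have := ne i iin; have := ne i' i'in.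
  case: (ltnP i j) => h1; case: (ltnP i' j) => h2; lia.
- move=> i iin; have := allP Bd i iin => lt; have := ne i iin => nij.
  have szt : size (take j s) = j by rewrite size_take js.
  rewrite size_cat szt size_drop nth_cat szt.
  case: (ltnP i j) => h.
    case: ifP => h2; last lia.
    rewrite nth_take //; split => //; lia.
  have h' : (i.-1 < j) = false by apply/negbTE; lia.
  case: ifP => h2; first lia.
  rewrite nth_drop; split; first lia.
  congr nth; lia.
- move=> i iin i1n; have := ne i iin; have := ne _ i1n.
  case: (ltnP i j) => h1; case: (ltnP i.+1 j) => h2; lia.
Qed.

Lemma contains_rev s p : size (pund p) = size (pperm p) ->
  contains s p -> contains (rev s) (pat_rev p).
Proof.
move=> Su /containsP[idx [So Bd /and3P[/eqP Sz Ord Adj]]].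
set n := size s; set k := size (pperm p).
set f := fun i => n.-1 - i.
have Bd' : forall i, i \in idx -> i < n by move=> i /(allP Bd).
have Ni : forall a, a < k -> nth 0 idx a \in idx.
  by move=> a ak; apply: mem_nth; rewrite Sz.
have Nidx : forall a, a < k -> nth 0 (rev (map f idx)) a = f (nth 0 idx (k - a.+1)).
  move=> a ak; rewrite nth_rev size_map Sz // (nth_map 0) // Sz; lia.
have Ns : forall i, i < n -> nth 0 (rev s) (f i) = nth 0 s i.
  move=> i lt; rewrite nth_rev /f -/n; last lia.
  congr nth; lia.
apply/containsP; exists (rev (map f idx)); split.
- rewrite rev_sorted; apply: (homo_sorted_in (P := fun i => i < n) (e := ltn)) => //.
  by move=> x y xn yn /= xy; rewrite /f; move: xn yn; rewrite !unfold_in /=; lia.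
- rewrite all_rev; apply/allP => _ /mapP[i iin ->].
  rewrite size_rev -/n /f; have := Bd' i iin; lia.
apply/and3P; split.
- by rewrite size_rev size_map /pat_rev /= size_rev Sz.
- rewrite /pat_rev /= size_rev -/k.
  apply/allP => a; rewrite mem_iota add0n => /andP[_ ak].
  apply/allP => b; rewrite mem_iota add0n => /andP[_ bk].
  have ak' : k - a.+1 < k by lia.
  have bk' : k - b.+1 < k by lia.
  have := allP Ord (k - a.+1); rewrite mem_iota add0n => /(_ ak') /allP Ha.
  have := Ha (k - b.+1); rewrite mem_iota add0n => /(_ bk').
  rewrite (Nidx a ak) (Nidx b bk) !Ns; try by apply: Bd'; apply: Ni.
  by rewrite !nth_rev.
- rewrite /pat_rev /= size_rev -/k.
  apply/allP => j; rewrite mem_iota add0n => /andP[_ jk].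
  have jk' : k - j.+2 < k.-1 by lia.
  have := allP Adj (k - j.+2); rewrite mem_iota add0n => /(_ jk') /implyP H.
  rewrite !nth_rev ?Su ?size_map ?Sz -/k; try lia.
  apply/implyP => /andP[u1 u2].
  have E : (k - j.+2).+1 = k - j.+1 by lia.
  move: H; rewrite E andbC u1 u2 => /(_ isT) /eqP H.
  have b1 := Bd' _ (Ni (k - j.+1) ltac:(lia)).
  rewrite !(nth_map 0) ?Sz; try lia.
  rewrite /f H; apply/eqP; move: b1; rewrite H; lia.
Qed.

Lemma push_nopop sg x st out : avoids (x :: st) sg -> push_step sg x st out = (x :: st, out).
Proof. by case: st => [|y st] /= ->. Qed.

Lemma avoids_small sg x : 2 <= size (pperm sg) -> avoids [:: x] sg.
Proof. by move=> h; apply/negP => /contains_size /=; lia. Qed.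

Lemma push_pop sg x st out : 2 <= size (pperm sg) -> ~~ avoids (x :: st) sg ->
  exists popped y rest, [/\ st = popped ++ y :: rest,
    push_step sg x st out = (x :: rest, out ++ popped ++ [:: y]),
    ~~ avoids (x :: y :: rest) sg & avoids (x :: rest) sg].
Proof.
move=> h2; elim: st out => [|y st IH] out; first by rewrite avoids_small.
move=> Hn /=; rewrite (negbTE Hn).
case A: (avoids (x :: st) sg).
  exists [::], y, st; split => //; first by rewrite push_nopop //= cats1.
have [popped [y' [rest [E1 E2 E3 E4]]]] := IH (rcons out y) (negbT A).
exists (y :: popped), y', rest; split => //; first by rewrite E1.
by rewrite E2 cat_rcons.
Qed.

Lemma push_gen sg x st out : 2 <= size (pperm sg) ->
  exists popped rest, [/\ st = popped ++ rest,
    push_step sg x st out = (x :: rest, out ++ popped) & avoids (x :: rest) sg].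
Proof.
move=> h2; case A: (avoids (x :: st) sg).
  by exists [::], st; rewrite push_nopop // cats0.
have [popped [y [rest [E1 E2 E3 E4]]]] := push_pop out h2 (negbT A).
by exists (popped ++ [:: y]), rest; rewrite E2 E1 -!catA.
Qed.

Lemma sc_loop_spec sg tau st out : 2 <= size (pperm sg) ->
  exists r, [/\ sc_loop sg tau st out = out ++ r, subseq st r & perm_eq r (st ++ tau)].
Proof.
move=> h2; elim: tau st out => [|x tau IH] st out /=.
  by exists st; rewrite cats0.
have [popped [rest [E1 E2 E3]]] := push_gen x st out h2.
rewrite E2; have [r [R1 R2 R3]] := IH (x :: rest) (out ++ popped).
exists (popped ++ r); split.
- by rewrite R1 catA.
- rewrite E1; apply: cat_subseq => //.
  by apply: subseq_trans R2; apply: subseq_cons.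
- have C := permP R3; rewrite E1; apply/permP => q.
  by rewrite count_cat C !count_cat /=; lia.
Qed.

Lemma nth_dec k a : a < k -> nth 0 (rev (iota 1 k)) a = k - a.
Proof. by move=> ak; rewrite nth_rev size_iota // nth_iota; lia. Qed.

Lemma KL k und x y rest : 3 <= k ->
  let sg := Pattern (rev (iota 1 k)) und in
  avoids (y :: rest) sg -> avoids (x :: rest) sg -> ~~ avoids (x :: y :: rest) sg ->
  exists2 b, b \in rest & b < y < x.
Proof.
move=> k3 sg Ay Ax /negPn /containsP[idx [So Bd Oc]].
have Oc' := Oc; case/and3P: Oc' => /eqP Sz Ord _.
rewrite /sg /= size_rev size_iota in Sz Ord.
have Lt : forall a b, a < b < k -> nth 0 (x :: y :: rest) (nth 0 idx b) < nth 0 (x :: y :: rest) (nth 0 idx a).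
  move=> a b /andP[ab bk].
  have ak : a < k by lia.
  have := allP Ord b; rewrite mem_iota add0n => /(_ bk) /allP /(_ a).
  rewrite mem_iota add0n => /(_ ak) /eqP ->.
  rewrite !nth_dec //; lia.
clear Ord.
case: idx So Bd Oc Sz Lt => [|i0 [|i1 [|i2 t]]] So Bd Oc Sz Lt; try (simpl in Sz; lia).
have So' := So.
move: So'; rewrite /= path_sortedE; last exact: ltn_trans.
case/andP => l01 /and3P[l12 A2 _].
have i0z : i0 = 0.
  apply/eqP; apply: contraT => ne.
  have C : contains (take 0 (x :: y :: rest) ++ drop 1 (x :: y :: rest)) sg.
    apply: (contains_del So Bd Oc) => //.
    apply/negP; rewrite !inE => /orP[/eqP|/orP[/eqP|/orP[/eqP|/(allP A2)]]];
      move: ne; rewrite /ltn /=; lia.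
  by move: Ay; rewrite /avoids C.
have i1o : i1 = 1.
  apply/eqP; apply: contraT => ne.
  have C : contains (take 1 (x :: y :: rest) ++ drop 2 (x :: y :: rest)) sg.
    apply: (contains_del So Bd Oc) => //.
    apply/negP; rewrite !inE => /orP[/eqP|/orP[/eqP|/orP[/eqP|/(allP A2)]]];
      move: ne; rewrite /ltn /=; lia.
  have E : take 1 (x :: y :: rest) ++ drop 2 (x :: y :: rest) = x :: rest by rewrite /= drop0.
  by move: Ax; rewrite /avoids -E C.
subst i0 i1.
have b2 : i2 < (size rest).+2 by have := allP Bd i2; rewrite !inE eqxx !orbT => /(_ isT).
have E2 : i2 = (i2 - 2).+2 by lia.
exists (nth 0 rest (i2 - 2)).
  by apply: mem_nth; rewrite -2!ltnS -E2.
have := Lt 0 1 ltac:(lia); have := Lt 1 2 ltac:(lia); by rewrite /= {1}E2 /= => -> ->.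
Qed.


Lemma dichotomy k und : 3 <= k ->
  let sg := Pattern (rev (iota 1 k)) und in
  forall tau st out, avoids st sg ->
  (sc_loop sg tau st out = out ++ rev tau ++ st /\ avoids (rev tau ++ st) sg) \/
  (exists u x v, [/\ tau = u ++ x :: v, ~~ avoids (x :: (rev u ++ st)) sg &
     exists a b c, a < b < c /\ subseq [:: b; c; a] (sc_loop sg tau st out)]).
Proof.
move=> k3 sg; have h2 : 2 <= size (pperm sg) by rewrite /= size_rev size_iota; lia.
elim=> [|x tau IH] st out Ast /=.
  by left.
case A: (avoids (x :: st) sg).
  rewrite push_nopop //.
  case: (IH (x :: st) out A) => [[E1 E2]|[u [x' [v [E1 E2 E3]]]]].
    by left; rewrite E1 rev_cons cat_rcons.
  right; exists (x :: u), x', v; split => //; first by rewrite E1.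
  by rewrite rev_cons cat_rcons.
right; exists [::], x, tau; split => //; first by rewrite A.
have [popped [y [rest [E1 E2 E3 E4]]]] := push_pop out h2 (negbT A).
have Ay : avoids (y :: rest) sg.
  by apply: contraNN Ast; rewrite E1; apply: contains_catl.
have [b brest /andP[bly yx]] := KL k3 Ay E4 E3.
rewrite E2; have [r [R1 R2 R3]] := sc_loop_spec tau (x :: rest) (out ++ popped ++ [:: y]) h2.
exists b, y, x; split; first by rewrite bly yx.
rewrite R1 (_ : [:: y; x; b] = [:: y] ++ [:: x; b]) //.
apply: cat_subseq.
  by rewrite catA; apply: suffix_subseq.
apply: subseq_trans R2 => /=; rewrite eqxx sub1seq //.
Qed.

Lemma h21 : 2 <= size (pperm pat21). Proof. by []. Qed.

Lemma avoids21_cons x l : avoids (x :: l) pat21 -> forall y, y \in l -> x <= y.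
Proof.
move=> A y yl; rewrite leqNgt; apply/negP => yx; move/negP: A; apply.
by apply/contains21; exists x, y; split => //=; rewrite eqxx sub1seq.
Qed.

Lemma sorted_avoids21 l : sorted leq l -> avoids l pat21.
Proof.
move=> H; apply/negP => /contains21 [a [b [ba S]]].
by have := subseq_sorted leq_trans S H; rewrite /= andbT leqNgt ba.
Qed.

Lemma K1a b a tau st out : b \in out -> a \in tau ->
  subseq [:: b; a] (sc_loop pat21 tau st out).
Proof.
move=> bo ain; have [r [R1 _ R3]] := sc_loop_spec tau st out h21.
rewrite R1 (_ : [:: b; a] = [:: b] ++ [:: a]) //; apply: cat_subseq; rewrite sub1seq //.
by rewrite (perm_mem R3) mem_cat ain orbT.
Qed.

Lemma K1b b c a v : b < c -> a \in v -> forall u st out, b \in u ++ st ++ out ->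
  subseq [:: b; a] (sc_loop pat21 (u ++ c :: v) st out).
Proof.
move=> bc av; elim=> [|x u IH] st out /=.
  have [popped [rest [E1 E2 E3]]] := push_gen c st out h21.
  move=> bin; rewrite E2; apply: K1a => //.
  have bnr : b \notin rest.
    by apply/negP => /(avoids21_cons E3); rewrite leqNgt bc.
  move: bin bnr; rewrite E1 !mem_cat.
  by case: (b \in popped); case: (b \in rest); case: (b \in out).
have [popped [rest [E1 E2 E3]]] := push_gen x st out h21.
move=> bin; rewrite E2; apply: IH.
move: bin; rewrite E1 !mem_cat !inE => /orP[->|]; rewrite ?orbT // !mem_cat.
by case: (b == x); case: (b \in u); case: (b \in popped); case: (b \in rest); case: (b \in out).
Qed.

Lemma subseq_split (c : nat) s l : subseq (c :: s) l ->
  exists u v, l = u ++ c :: v /\ subseq s v.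
Proof.
elim: l => [|z l IH] //=.
case: eqP => [->|ne] H; first by exists [::], l.
have [u [v [E S]]] := IH H; exists (z :: u), v; by rewrite E.
Qed.

Lemma K1 a b c pi : a < b < c -> subseq [:: b; c; a] pi ->
  subseq [:: b; a] (west_s pi).
Proof.
case/andP => ab bc /subseq_split [u1 [v1 [E1 S1]]].
have [u2 [v2 [E2 S2]]] := subseq_split S1.
rewrite /west_s /SC E1 E2 (_ : u1 ++ b :: u2 ++ c :: v2 = (u1 ++ b :: u2) ++ c :: v2);
  last by rewrite -catA.
apply: K1b => //; first by rewrite -sub1seq.
by rewrite !mem_cat inE eqxx orbT.
Qed.

Lemma sorted_cat_le l1 l2 : sorted leq (l1 ++ l2) -> forall a b, a \in l1 -> b \in l2 -> a <= b.
Proof.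
rewrite (sorted_pairwise leq_trans) pairwise_cat => /and3P[/allrelP H _ _]; exact: H.
Qed.

Lemma sorted_ins l1 l2 x : sorted leq (l1 ++ l2) -> (forall z, z \in l1 -> z <= x) ->
  (forall z, z \in l2 -> x <= z) -> sorted leq (l1 ++ x :: l2).
Proof.
rewrite !(sorted_pairwise leq_trans) !pairwise_cat pairwise_cons allrel_consr.
move=> /and3P[R P1 P2] H1 H2; rewrite R P1 P2 !andbT; apply/andP; split; apply/allP => z zin.
  exact: H1.
exact: H2.
Qed.

Definition avoid231 (l : seq nat) := forall a b c, a < b < c -> ~~ subseq [:: b; c; a] l.

Lemma K2 w : forall h st out, avoid231 (h ++ w) -> {subset st <= h} ->
  sorted leq (out ++ st) -> (forall y z, y \in out -> z \in w -> y <= z) ->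
  sorted leq (sc_loop pat21 w st out).
Proof.
elim: w => [|x w IH] h st out Av Sub S H /=; first by [].
case A: (avoids (x :: st) pat21).
  rewrite push_nopop //; apply: (IH (rcons h x)).
  - by rewrite cat_rcons.
  - by move=> z; rewrite inE mem_rcons inE => /orP[->//|/Sub ->]; rewrite orbT.
  - apply: sorted_ins S _ (avoids21_cons A) => z zin; apply: H => //.
    by rewrite inE eqxx.
  - by move=> y z yin zin; apply: H => //; rewrite inE zin orbT.
have [popped [y [rest [E1 E2 E3 E4]]]] := push_pop out h21 (negbT A).
rewrite E2; move: S; rewrite E1 => S.
have yx : y < x.
  rewrite ltnNge; apply/negP => xy; move/negP: E3; apply; apply: sorted_avoids21.
  have Sy : sorted leq (y :: rest).
    by apply: (subseq_sorted leq_trans _ S); rewrite catA; apply: suffix_subseq.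
  by rewrite /= xy.
have le_y : forall z, z \in out ++ popped ++ [:: y] -> z <= y.
  move=> z; rewrite catA mem_cat inE => /orP[zin|/eqP -> //].
  by apply: (sorted_cat_le (l1 := out ++ popped) (l2 := y :: rest)) => //;
    [rewrite -catA | rewrite inE eqxx].
apply: (IH (rcons h x)).
- by rewrite cat_rcons.
- move=> z; rewrite inE mem_rcons inE => /orP[->//|zin]; rewrite Sub ?orbT //.
  by rewrite E1 mem_cat inE zin !orbT.
- apply: sorted_ins; first by rewrite -!catA.
    by move=> z /le_y zy; apply: leq_trans zy (ltnW yx).
  exact: avoids21_cons E4.
- move=> y' z y'in zin.
  move: y'in; rewrite mem_cat => /orP[y'o|y'p].
    by apply: H => //; rewrite inE zin orbT.
  rewrite leqNgt; apply/negP => zy'.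
  have y'x : y' < x.
    by apply: leq_ltn_trans yx; apply: le_y; rewrite mem_cat y'p orbT.
  have y'h : y' \in h.
    apply: Sub; rewrite E1 mem_cat inE; move: y'p; rewrite mem_cat inE.
    by case/orP=> ->; rewrite ?orbT.
  move/negP: (Av z y' x ltac:(lia)); apply.
  rewrite (_ : [:: y'; x; z] = [:: y'] ++ [:: x; z]) //.
  by apply: cat_subseq; rewrite ?sub1seq //= eqxx sub1seq.
Qed.

Lemma K2final pi n : avoid231 pi -> perm_eq pi (iota 1 n) -> west_s pi = iota 1 n.
Proof.
move=> Av P.
have S : sorted leq (west_s pi).
  by apply: (K2 (h := [::])) => //.
have [r [R1 _ R3]] := sc_loop_spec pi [::] [::] h21.
apply: (sorted_eq leq_trans anti_leq S (iota_sorted 1 n)).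
by rewrite /west_s /SC R1 /=; apply: perm_trans R3 P.
Qed.

Unset Implicit Arguments.

Theorem mainTheorem4 (k : nat) (und : seq bool) :
  3 <= k -> size und = k ->
  let sigma := Pattern (rev (iota 1 k)) und in
  forall n : nat, 0 < n ->
  forall tau : seq nat,
    in_Sort n sigma tau = in_Av n [:: pat_rev sigma; pat132] tau.
Proof.
move=> k3 Su sg n _ tau.
rewrite /in_Sort /in_Av /avoids_all /=.
case P: (is_perm n tau) => //=.
have SzU : size (pund sg) = size (pperm sg) by rewrite /= size_rev size_iota.
have SzU' : size (pund (pat_rev sg)) = size (pperm (pat_rev sg)).
  by rewrite /= !size_rev size_iota.
have RR : pat_rev (pat_rev sg) = sg by rewrite /pat_rev /= !revK.
have RevEq : forall s, contains (rev s) sg = contains s (pat_rev sg).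
  move=> s; apply/idP/idP => H.
    by have := contains_rev SzU H; rewrite revK.
  by have := contains_rev SzU' H; rewrite RR.
have A0 : avoids [::] sg.
  by apply/negP => /contains_size; rewrite /= size_rev size_iota; lia.
have NotId : forall a b c pi, a < b < c -> subseq [:: b; c; a] pi -> west_s pi != iota 1 n.
  move=> a b c pi abc S; apply/negP => /eqP W.
  have := K1 abc S; rewrite W => Sb.
  have := subseq_sorted ltn_trans Sb (iota_ltn_sorted 1 n); rewrite /= andbT => ba.
  lia.
case: (@dichotomy k und k3 tau [::] [::] A0) =>
  [[E1 E2]|[u [x [v [E1 E2 [a [b [c [abc Sub]]]]]]]]].
  rewrite /SC E1 /= cats0.
  move: E2; rewrite cats0 /avoids RevEq => ->; rewrite /= andbT.
  apply/eqP/idP => [W|A132].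
    apply/negP => /contains132 [a [b [c [abc S]]]].
    have S' : subseq [:: b; c; a] (rev tau).
      by rewrite (_ : [:: b; c; a] = rev [:: a; c; b]) // subseq_rev.
    by move: (NotId _ _ _ _ abc S'); rewrite W eqxx.
  apply: K2final; last by rewrite perm_rev.
  move=> a b c abc; apply/negP => S; move/negP: A132; apply.
  apply/contains132; exists a, b, c; split => //.
  by rewrite -subseq_rev.
have -> : (west_s (SC sg tau) == iota 1 n) = false by apply/negbTE; exact: NotId abc Sub.
have -> : avoids tau (pat_rev sg) = false.
  apply/negbTE/negPn; move: E2; rewrite /avoids cats0 negbK -rev_rcons RevEq E1 -cat_rcons.
  exact: contains_catr.
by [].
Qed.
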